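(* For every $\mathrm{HyperLTL}_{\mathrm{temp}}$ formula $\psi$, every weighted Kripke structure $K$, and every trace assignment $\Pi$ such that $\Pi(\pi)\in\mathbb L(K)$ for every free variable $\pi$ of $\psi$, $$\llbracket\psi\rrbracket_{\mathbb T(K)}(\Pi)=\llbracket\psi\rrbracket_{\mathbb L(K)}(\Pi).$$ In particular, for closed $\psi$, $\llbracket\psi\rrbracket_{\mathbb T(K)}([\,])=\llbracket\psi\rrbracket_{\mathbb L(K)}([\,])$.
   Context: Fix a finite set $\mathrm{AP}$ of atomic propositions and an infinite set $\mathcal V$ of trace variables. A trace is an infinite sequence $t=t[0]t[1]\cdots$ with $t[i]\in[0,1]^{\mathrm{AP}}$; $\mathbb T$ is the set of all traces; $t[i,\infty]$ is the suffix from position $i$. A lasso is a trace of the form $uv^\omega$ with $u,v$ finite words ($v$ non-empty). A trace assignment $\Pi$ is a partial map $\mathcal V\rightharpoonup\mathbb T$; $\Pi[i,\infty]$ is $\pi\mapsto\Pi(\pi)[i,\infty]$; $\Pi[\pi\mapsto t]$ is $\Pi$ updated at $\pi$; $[\,]$ is the empty assignment. A weighted Kripke structure is $K=(S,\mathbb W,I,\to,L)$ with $S$ finite, $\mathbb W\subset[0,1]$ a finite set of rational weights, $I\subseteq S$ non-empty, $\to\subseteq S\times S$ total, $L:S\to\mathbb W^{\mathrm{AP}}$. $\mathbb T(K)$ is the set of traces $L(s_0)L(s_1)\cdots$ for infinite paths $s_0\to s_1\to\cdots$ with $s_0\in I$; $\mathbb L(K)$ is the set of lassos in $\mathbb T(K)$.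 A discounting sequence is a strictly decreasing sequence $\eta=(\eta_i)_{i\in\mathbb N}$ of rationals in $(0,1]$ with $\lim_i\eta_i=0$, assumed recursively enumerable. $\mathrm{HyperLTL}_{\mathrm{temp}}$ (parameterised by a finite set $\mathcal D$ of discounting sequences) has syntax $\psi::=\forall\pi\,\psi\mid\exists\pi\,\psi\mid\phi$, $\phi::=p_\pi\mid\neg\phi\mid\phi\vee\phi\mid X\phi\mid\phi U\phi\mid\phi U_\eta\phi$ ($\eta\in\mathcal D$). For non-empty $T\subseteq\mathbb T$: $\llbracket p_\pi\rrbracket_T(\Pi)=\Pi(\pi)[0](p)$, $\llbracket\neg\phi\rrbracket=1-\llbracket\phi\rrbracket$, $\vee$ is $\max$, $\llbracket X\phi\rrbracket_T(\Pi)=\llbracket\phi\rrbracket_T(\Pi[1,\infty])$, $\llbracket\phi_1U\phi_2\rrbracket_T(\Pi)=\sup_{i\ge0}\min\big(\llbracket\phi_2\rrbracket_T(\Pi[i,\infty]),\min_{0\le j<i}\llbracket\phi_1\rrbracket_T(\Pi[j,\infty])\big)$, $\llbracket\phi_1U_\eta\phi_2\rrbracket_T(\Pi)=\sup_{i\ge0}\min\big(\eta_i\llbracket\phi_2\rrbracket_T(\Pi[i,\infty]),\min_{0\le j<i}\eta_j\llbracket\phi_1\rrbracket_T(\Pi[j,\infty])\big)$, $\llbracket\forall\pi\,\psi\rrbracket_T(\Pi)=\inf_{t\in T}\llbracket\psi\rrbracket_T(\Pi[\pi\mapsto t])$, $\llbracket\exists\pi\,\psi\rrbracket_T(\Pi)=\sup_{t\in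 T}\llbracket\psi\rrbracket_T(\Pi[\pi\mapsto t])$. *)

(* Defs.v *)
From HB Require Import structures.
From mathcomp Require Import all_boot all_order all_algebra.
From mathcomp Require Import boolp classical_sets reals.
Set Implicit Arguments. Unset Strict Implicit. Unset Printing Implicit Defensive.
Import Order.TTheory GRing.Theory Num.Theory.
Local Open Scope ring_scope.
Local Open Scope classical_set_scope.

Definition tvar := nat.

(* traces over the atomic propositions AP, valued in R (meant to be [0,1]) *)
Definition trace (AP : finType) (R : realType) := nat -> (AP -> R).

Definition suffix AP R (t : trace AP R) (i : nat) : trace AP R := fun k => t (k + i)%N.

(* lasso u v^omega, v non-empty *)
Definition is_lasso AP R (t : trace AP R) : Prop :=
  exists (u v : seq (AP -> R)), v != [::] /\
    forall i, t i = if (i < size u)%N then nth (fun _ => 0) u i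
                    else nth (fun _ => 0) v ((i - size u) %% size v)%N.

Definition discounting (eta : nat -> rat) : Prop :=
  (forall i, eta i.+1 < eta i) /\ (forall i, 0 < eta i /\ eta i <= 1) /\
  (forall eps : rat, 0 < eps -> exists N, forall i, (N <= i)%N -> eta i < eps).

Inductive qf (AP : Type) : Type :=
  | Prop_ (p : AP) (pi : tvar)
  | Neg (f : qf AP)
  | Or (f g : qf AP)
  | Next (f : qf AP)
  | Until (f g : qf AP)
  | DUntil (eta : nat -> rat) (f g : qf AP).

Inductive hform (AP : Type) : Type :=
  | Forall (pi : tvar) (f : hform AP)
  | Exists (pi : tvar) (f : hform AP)
  | QF (f : qf AP).

Fixpoint qf_wf AP (f : qf AP) : Prop :=
  match f with
  | Prop_ _ _ => True
  | Neg g => qf_wf g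
  | Or g h | Until g h => qf_wf g /\ qf_wf h
  | Next g => qf_wf g
  | DUntil eta g h => discounting eta /\ qf_wf g /\ qf_wf h
  end.
Fixpoint hform_wf AP (f : hform AP) : Prop :=
  match f with
  | Forall _ g | Exists _ g => hform_wf g
  | QF g => qf_wf g
  end.

Fixpoint qf_fv AP (f : qf AP) (x : tvar) : bool :=
  match f with
  | Prop_ _ pi => pi == x
  | Neg g | Next g => qf_fv g x
  | Or g h | Until g h | DUntil _ g h => qf_fv g x || qf_fv h x
  end.
Fixpoint hform_fv AP (f : hform AP) (x : tvar) : bool :=
  match f with
  | Forall pi g | Exists pi g => (pi != x) && hform_fv g x
  | QF g => qf_fv g x
  end.

Definition assignment AP R := tvar -> option (trace AP R).
Definition empty_assign AP R : assignment AP R := fun _ => None.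
Definition shift AP R (Pi : assignment AP R) (i : nat) : assignment AP R :=
  fun x => omap (fun t => suffix t i) (Pi x).
Definition update AP R (Pi : assignment AP R) (pi : tvar) (t : trace AP R)
  : assignment AP R := fun x => if x == pi then Some t else Pi x.

Section Semantics.
Variables (AP : finType) (R : realType).

(* min over j < i of F j; the empty min is 1 (the top of [0,1]) *)
Definition min_lt (i : nat) (F : nat -> R) : R := \big[Num.min/1]_(j < i) F j.

Fixpoint qf_sem (f : qf AP) (Pi : assignment AP R) : R :=
  match f with
  | Prop_ p pi => match Pi pi with Some t => t 0%N p | None => 0 end
  | Neg g => 1 - qf_sem g Pi
  | Or g h => Num.max (qf_sem g Pi) (qf_sem h Pi)
  | Next g => qf_sem g (shift Pi 1)
  | Until g h =>
      sup [set x | exists i : nat, x = Num.min (qf_sem h (shift Pi i))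
                          (min_lt i (fun j => qf_sem g (shift Pi j)))]
  | DUntil eta g h =>
      sup [set x | exists i : nat, x = Num.min (ratr (eta i) * qf_sem h (shift Pi i))
                          (min_lt i (fun j => ratr (eta j) * qf_sem g (shift Pi j)))]
  end.

Fixpoint sem (T : set (trace AP R)) (f : hform AP) (Pi : assignment AP R) : R :=
  match f with
  | Forall pi g => inf [set x | exists2 t, T t & x = sem T g (update Pi pi t)]
  | Exists pi g => sup [set x | exists2 t, T t & x = sem T g (update Pi pi t)]
  | QF g => qf_sem g Pi
  end.
End Semantics.

Record kripke (AP : finType) := Kripke {
  St : finType;
  init : {set St};
  trans : rel St;
  lab : St -> AP -> rat;
  init_nonempty : init != finset.set0;
  trans_total : forall s, exists s', trans s s';
  lab_range : forall s p, 0 <= lab s p <= 1 }.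

Definition traces_of AP (R : realType) (K : kripke AP) : set (trace AP R) :=
  [set t | exists s : nat -> St K, s 0%N \in init K /\
     (forall i, trans (s i) (s i.+1)) /\
     (forall i p, t i p = ratr (lab (s i) p))].
Arguments traces_of {AP} R K.

Definition lassos_of AP (R : realType) (K : kripke AP) : set (trace AP R) :=
  [set t | traces_of R K t /\ is_lasso t].
Arguments lassos_of {AP} R K.

(* Main.v *)
Require Import Defs.
From mathcomp Require Import all_boot all_order all_algebra.
From mathcomp Require Import boolp classical_sets reals.
From mathcomp Require Import lra.
Set Implicit Arguments. Unset Strict Implicit. Unset Printing Implicit Defensive.
Import Order.TTheory GRing.Theory Num.Theory.

Definition infinite (X : nat -> Prop) := forall n, exists x, (n <= x)%N /\ X x.

Lemma inf_pigeon (T : finType) (f : nat -> T) (X : nat -> Prop) :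
  infinite X -> exists a, infinite (fun x => X x /\ f x = a).
Proof.
move=> hX; apply: contrapT => H.
have H' : forall a, exists n, forall x, (n <= x)%N -> ~ (X x /\ f x = a).
  move=> a; apply: contrapT => Ha; apply: H; exists a => n.
  apply: contrapT => Hn; apply: Ha; exists n => x lex HX.
  by apply: Hn; exists x.
have [g Hg] := choice H'.
have [x [lex Xx]] := hX (\max_(a : T) g a).
apply: (Hg (f x) x) => //.
apply: leq_trans lex; exact: (leq_bigmax_cond (f x)).
Qed.

Section Ramsey.
Variables (S : finType) (c : nat -> nat -> S).

Definition iset := {X : nat -> Prop | infinite X}.

Lemma step_ex (X : iset) : exists t : nat * S * iset,
  proj1_sig X t.1.1 /\
  forall y, proj1_sig t.2 y -> [/\ proj1_sig X y, (t.1.1 < y)%N & c t.1.1 y = t.1.2].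
Proof.
case: X => X hX /=.
have [x [_ Xx]] := hX 0%N.
have hX' : infinite (fun y => X y /\ (x < y)%N).
  move=> n; have [y [ley Xy]] := hX (maxn n x.+1).
  exists y; split; [|split] => //.
    by apply: leq_trans ley; rewrite leq_maxl.
  by apply: leq_trans ley; rewrite leq_maxr.
have [a ha] := inf_pigeon (c x) hX'.
exists (x, a, exist _ _ ha) => /=; split => // y [[Xy xy] cy]; split => //.
Qed.

Definition step (X : iset) := proj1_sig (cid (step_ex X)).

Lemma stepP (X : iset) : proj1_sig X (step X).1.1 /\
  forall y, proj1_sig (step X).2 y ->
     [/\ proj1_sig X y, ((step X).1.1 < y)%N & c (step X).1.1 y = (step X).1.2].
Proof. exact: (proj2_sig (cid (step_ex X))). Qed.

Lemma inf_all : infinite (fun _ => True).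
Proof. by move=> n; exists n. Qed.

Fixpoint sets (k : nat) : iset :=
  match k with 0 => exist _ _ inf_all | k.+1 => (step (sets k)).2 end.

Definition xs k := (step (sets k)).1.1.
Definition cs k := (step (sets k)).1.2.

Lemma sets_mono k l : (k <= l)%N -> forall y, proj1_sig (sets l) y -> proj1_sig (sets k) y.
Proof.
elim: l => [|l IH]; first by rewrite leqn0 => /eqP->.
rewrite leq_eqVlt => /orP[/eqP->//|]; rewrite ltnS => kl y /=.
by case/(proj2 (stepP (sets l)))=> Hy _ _; apply: IH.
Qed.

Lemma xs_prop k l : (k < l)%N -> (xs k < xs l)%N /\ c (xs k) (xs l) = cs k.
Proof.
move=> kl.
have H : proj1_sig (sets k.+1) (xs l).
  by apply: (sets_mono kl); exact: (proj1 (stepP (sets l))).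
by case: ((proj2 (stepP (sets k))) _ H).
Qed.

Lemma ramsey : exists q : nat -> nat, (forall i, (q i < q i.+1)%N) /\
  exists e, forall i j, (i < j)%N -> c (q i) (q j) = e.
Proof.
have [e he] := inf_pigeon cs inf_all.
have hn : forall n, exists k, (n < k)%N /\ cs k = e.
  by move=> n; have [k [lk [_ ck]]] := he n.+1; exists k.
have [nx hnx] := choice hn.
pose K := fix K i := match i with 0 => nx 0%N | i.+1 => nx (K i) end.
have Kinc : forall i, (K i < K i.+1)%N by move=> i; exact: (proj1 (hnx _)).
have Kmono : forall i j, (i < j)%N -> (K i < K j)%N.
  move=> i j; elim: j => // j IH; rewrite ltnS leq_eqVlt => /orP[/eqP->//|/IH].
  by move/ltn_trans; apply.
have Ke : forall i, cs (K i) = e by case=> [|i]; exact: (proj2 (hnx _)).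
exists (fun i => xs (K i)); split.
  by move=> i; exact: (proj1 (xs_prop (Kinc i))).
exists e => i j ij; rewrite (proj2 (xs_prop (Kmono _ _ ij))); exact: Ke.
Qed.
End Ramsey.

Section Frame.
Variables (A : finType) (R : realType).
Local Open Scope ring_scope.

Definition slice (w : nat -> A) (a b : nat) : seq A := [seq w k | k <- iota a (b - a)].
Definition sh (w : nat -> A) (i : nat) : nat -> A := fun k => w (k + i)%N.
Definition factor (p : nat -> nat) := p 0%N = 0%N /\ forall m, (p m < p m.+1)%N.
Definition beq (S : Type) (h : seq A -> S) (w w' : nat -> A) :=
  exists p p', [/\ factor p, factor p' &
    forall m, h (slice w (p m) (p m.+1)) = h (slice w' (p' m) (p' m.+1))].
Definition recog (F : (nat -> A) -> R) (eps : R) :=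
  exists (S : finType) (h : seq A -> S), forall w w', beq h w w' -> F w <= F w' + eps.

Lemma beq_sym S (h : seq A -> S) w w' : beq h w w' -> beq h w' w.
Proof. by case=> p [p' [fp fp' H]]; exists p', p; split=> // m; rewrite H. Qed.

Lemma beq_map S S' (h : seq A -> S) (f : S -> S') w w' :
  beq h w w' -> beq (fun u => f (h u)) w w'.
Proof. by case=> p [p' [fp fp' H]]; exists p, p'; split=> // m; rewrite H. Qed.

Lemma size_slice w a b : size (slice w a b) = (b - a)%N.
Proof. by rewrite size_map size_iota. Qed.

Lemma slice_sh w i a b : slice (sh w i) a b = slice w (a + i) (b + i).
Proof.
rewrite /slice /sh subnDr; move: (b - a)%N => n; elim: n a => [|n IH] a //=.
by rewrite IH addSn.
Qed.

Lemma drop_slice w a b o : drop o (slice w a b) = slice w (a + o) b.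
Proof. by rewrite /slice -map_drop drop_iota subnDA. Qed.

Lemma factor_mono p : factor p -> forall i j, (i < j)%N -> (p i < p j)%N.
Proof.
case=> _ H i j; elim: j => // j IH; rewrite ltnS leq_eqVlt => /orP[/eqP->//|/IH].
by move/ltn_trans; apply.
Qed.

Lemma factor_lemono p : factor p -> forall i j, (i <= j)%N -> (p i <= p j)%N.
Proof.
move=> fp i j; rewrite leq_eqVlt => /orP[/eqP->//|/(factor_mono fp)]; exact: ltnW.
Qed.

Lemma factor_block p : factor p -> forall i, exists m, (p m <= i < p m.+1)%N.
Proof.
case=> p0 H; elim=> [|i [m /andP[h1 h2]]]; first by exists 0%N; move: (H 0%N); rewrite p0.
case: (ltnP i.+1 (p m.+1)) => h3.
  by exists m; rewrite h3 andbT; apply: leq_trans h1 _.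
exists m.+1; have e : p m.+1 = i.+1 by apply/eqP; rewrite eqn_leq h3 h2.
by rewrite {1}e leqnn /= -e.
Qed.

Lemma beq_sh S (h : seq A -> S) w w' p p' m o o' :
  factor p -> factor p' ->
  (forall k, h (slice w (p k) (p k.+1)) = h (slice w' (p' k) (p' k.+1))) ->
  (o < p m.+1 - p m)%N -> (o' < p' m.+1 - p' m)%N ->
  h (slice w (p m + o) (p m.+1)) = h (slice w' (p' m + o') (p' m.+1)) ->
  beq h (sh w (p m + o)) (sh w' (p' m + o')).
Proof.
move=> fp fp' H ho ho' H0.
set i := (p m + o)%N; set i' := (p' m + o')%N.
have hi : (i < p m.+1)%N by rewrite /i -ltn_subRL.
have hi' : (i' < p' m.+1)%N by rewrite /i' -ltn_subRL.
pose q k := if k is k.+1 then (p (m + k.+1) - i)%N else 0%N.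
pose q' k := if k is k.+1 then (p' (m + k.+1) - i')%N else 0%N.
have hiq k : (i < p (m + k.+1))%N.
  by apply: leq_trans hi _; apply: factor_lemono => //; rewrite addnS ltnS leq_addr.
have hiq' k : (i' < p' (m + k.+1))%N.
  by apply: leq_trans hi' _; apply: factor_lemono => //; rewrite addnS ltnS leq_addr.
exists q, q'; split.
- split=> // [[|k]] /=; first by rewrite subn_gt0 addn1.
  by rewrite ltn_sub2r // [(m + k.+2)%N]addnS; apply: (proj2 fp).
- split=> // [[|k]] /=; first by rewrite subn_gt0 addn1.
  by rewrite ltn_sub2r // [(m + k.+2)%N]addnS; apply: (proj2 fp').
- case=> [|k] /=; rewrite !slice_sh.
  + by rewrite !add0n !subnK ?addn1 ?(ltnW hi) ?(ltnW hi').
  + have e1 : (m + k.+2 = (m + k.+1).+1)%N by rewrite addnS.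
    have l1 : (i <= p (m + k.+2))%N by rewrite e1; apply: ltnW; apply: leq_trans (hiq k) _; apply: ltnW; apply: (proj2 fp).
    have l2 : (i' <= p' (m + k.+2))%N by rewrite e1; apply: ltnW; apply: leq_trans (hiq' k) _; apply: ltnW; apply: (proj2 fp').
    rewrite !subnK ?(ltnW (hiq _)) ?(ltnW (hiq' _)) // e1; exact: H.
Qed.

End Frame.

Section Colorings.
Variables (A : finType) (S : finType) (h : seq A -> S).

Lemma ltn_ord_slice (w : nat -> A) a b (o : 'I_(size (slice w a b))) : (o < b - a)%N.
Proof. by rewrite -(size_slice w); exact: ltn_ord. Qed.

Definition hU (u : seq A) : S * {set S * {set S}} * {set S} :=
  (h u, [set (h (drop o u), [set h (drop o2 u) | o2 : 'I_(size u) & (o2 < o)%N]) | o : 'I_(size u)],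
   [set h (drop o u) | o : 'I_(size u)]).

Lemma untilP w w' : beq hU w w' -> forall i, exists i',
  beq h (sh w i) (sh w' i') /\
  forall j', (j' < i')%N -> exists j, (j < i)%N /\ beq h (sh w j) (sh w' j').
Proof.
case=> p [p' [fp fp' H]] i.
have pi k : (p k < p k.+1)%N := proj2 fp k.
have pi' k : (p' k < p' k.+1)%N := proj2 fp' k.
have Hh k : h (slice w (p k) (p k.+1)) = h (slice w' (p' k) (p' k.+1)) by exact: (congr1 (fun x => x.1.1) (H k)).
have [m /andP[m1 m2]] := factor_block fp i.
set u := slice w (p m) (p m.+1); set u' := slice w' (p' m) (p' m.+1).
have ho : (i - p m < size u)%N by rewrite size_slice ltn_sub2r ?pi ?pi'.
pose o := Ordinal ho.
have : (h (drop o u), [set h (drop o2 u) | o2 : 'I_(size u) & (o2 < o)%N]) \in (hU u).1.2.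
  by apply/imsetP; exists o.
rewrite [(hU u).1.2](_ : _ = (hU u').1.2); last by exact: (congr1 (fun x => x.1.2) (H m)).
case/imsetP=> o' _ [e1 e2].
exists (p' m + o')%N; split.
  have -> : i = (p m + o)%N by rewrite /= subnKC.
  apply: beq_sh => //; first by rewrite /= ltn_sub2r ?pi.
    exact: ltn_ord_slice o'.
  by rewrite -!drop_slice -/u -/u' e1.
move=> j' hj'.
have [l /andP[l1 l2]] := factor_block fp' j'.
have lm : (l <= m)%N.
  rewrite leqNgt; apply/negP => ml.
  have : (p' m.+1 <= p' l)%N by apply: factor_lemono.
  move: (ltn_ord_slice o'); rewrite ltn_subRL => h1 h2.
  by move: (leq_trans (leq_trans h1 h2) l1); rewrite ltnNge (ltnW hj').
have hl' : (j' - p' l < size (slice w' (p' l) (p' l.+1)))%N by rewrite size_slice ltn_sub2r ?pi ?pi'.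
have [o2 [o2lt o2e]] : exists o2 : nat, (if l == m then (o2 < o)%N else (o2 < p l.+1 - p l)%N) /\
    h (drop o2 (slice w (p l) (p l.+1))) = h (drop (j' - p' l) (slice w' (p' l) (p' l.+1))).
  case: eqP => [elm|nlm].
    move: l2 l1 hl'; rewrite elm => l2 l1 hl'.
    have : h (drop (j' - p' m) u') \in [set h (drop o2 u') | o2 : 'I_(size u') & (o2 < o')%N].
      apply/imsetP; exists (Ordinal hl') => //; rewrite inE /=.
      by rewrite -(ltn_add2l (p' m)) subnKC.
    rewrite -e2 => /imsetP[o3]; rewrite inE => o3o ->.
    by exists o3.
  have : h (drop (j' - p' l) (slice w' (p' l) (p' l.+1))) \in (hU (slice w' (p' l) (p' l.+1))).2.
    by apply/imsetP; exists (Ordinal hl').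
  rewrite -[(hU (slice w' _ _)).2](_ : (hU (slice w (p l) (p l.+1))).2 = _); last by exact: (congr1 (fun x => x.2) (H l)).
  case/imsetP=> o3 _ ->; exists o3; split => //.
  exact: ltn_ord_slice.
exists (p l + o2)%N; split.
  case: eqP o2lt => [->|nlm] o2lt.
    by rewrite /= in o2lt; rewrite -(ltn_add2l (p m)) subnKC // in o2lt.
  have lm' : (l < m)%N by rewrite ltn_neqAle lm andbT; apply/eqP.
  apply: leq_trans m1; apply: leq_trans (factor_lemono fp lm').
  by rewrite -ltn_subRL.
have -> : j' = (p' l + (j' - p' l))%N by rewrite subnKC.
apply: beq_sh => //.
- by case: eqP o2lt => [->|] o2lt //; apply: (ltn_trans o2lt); rewrite /= ltn_sub2r ?pi ?pi'.
- by rewrite ltn_sub2r ?pi ?pi'.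
- by rewrite -!drop_slice o2e.
Qed.

Variable N : nat.
Definition hN (u : seq A) : S * 'I_N.+1 * {ffun 'I_N -> S} :=
  (h u, inord (minn (size u) N), [ffun o : 'I_N => h (drop o u)]).

Lemma posP w w' : beq hN w w' -> forall i, (i < N)%N -> beq h (sh w i) (sh w' i).
Proof.
case=> p [p' [fp fp' H]] i iN.
have pi k : (p k < p k.+1)%N := proj2 fp k.
have pi' k : (p' k < p' k.+1)%N := proj2 fp' k.
have Hh k : h (slice w (p k) (p k.+1)) = h (slice w' (p' k) (p' k.+1)) by exact: (congr1 (fun x => x.1.1) (H k)).
have Hs k : minn (size (slice w (p k) (p k.+1))) N = minn (size (slice w' (p' k) (p' k.+1))) N.
  move: (congr1 (fun x => val x.1.2) (H k)) => /=; rewrite !inordK //; rewrite ltnS; exact: geq_minr.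
have [m /andP[m1 m2]] := factor_block fp i.
have eq_lm : forall l, (l <= m)%N -> p' l = p l.
  elim=> [|l IH] lm; first by rewrite (proj1 fp) (proj1 fp').
  have lt : (p l.+1 - p l < N)%N.
    apply: leq_ltn_trans iN; apply: leq_trans m1; apply: leq_trans (leq_subr _ _) _.
    exact: factor_lemono.
  move: (Hs l); rewrite !size_slice (minn_idPl (ltnW lt)) IH ?(ltnW lm) // => e.
  have : (p' l.+1 - p l < N)%N.
    by move: lt; rewrite e; case: (leqP N (p' l.+1 - p l)) => _ //; rewrite ltnn.
  move=> lt'; move: e; rewrite (minn_idPl (ltnW lt')) => e.
  rewrite -[RHS](subnK (ltnW (pi l))) e subnK //.
  by rewrite -(IH (ltnW lm)); apply: ltnW.
have e0 := eq_lm m (leqnn m).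
have oN : (i - p m < N)%N by apply: leq_ltn_trans iN; exact: leq_subr.
have ho : (i - p m < p m.+1 - p m)%N by rewrite ltn_sub2r ?pi ?pi'.
have ho' : (i - p m < p' m.+1 - p' m)%N.
  move: (Hs m); rewrite !size_slice => e.
  have : (i - p m < minn (p m.+1 - p m) N)%N by rewrite leq_min ho oN.
  by rewrite e leq_min => /andP[].
have -> : i = (p m + (i - p m))%N by rewrite subnKC.
rewrite -[in sh w' _]e0.
apply: beq_sh => //; first by move: ho'; rewrite e0.
move: (congr1 (fun x : _ * {ffun _ -> _} => x.2 (Ordinal oN)) (H m)); rewrite !ffunE /=.
by rewrite !drop_slice e0.
Qed.

End Colorings.

Section RealLemmas.
Variable R : realType.
Local Open Scope ring_scope.
Local Open Scope classical_set_scope.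

Lemma sup_approx (X Y : set R) (e : R) : X !=set0 -> Y !=set0 ->
  (forall y, Y y -> y <= 1) -> (forall x, X x -> exists2 y, Y y & x <= y + e) ->
  sup X <= sup Y + e.
Proof.
move=> nX nY bY H; apply: ge_sup => // x /H [y Yy lxy].
apply: le_trans lxy _; rewrite lerD2r; apply: ub_le_sup => //.
by exists 1 => z /bY.
Qed.

Lemma inf_approx (X Y : set R) (e : R) : X !=set0 -> Y !=set0 ->
  (forall x, X x -> 0 <= x) -> (forall y, Y y -> exists2 x, X x & x <= y + e) ->
  inf X <= inf Y + e.
Proof.
move=> nX nY bX H; rewrite -lerBlDr; apply: lb_le_inf => // y /H [x Xx lxy].
rewrite lerBlDr; apply: le_trans lxy; apply: ge_inf => //.
by exists 0 => z /bX.
Qed.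

Lemma sup_bounds (X : set R) : X !=set0 -> (forall x, X x -> 0 <= x <= 1) ->
  0 <= sup X <= 1.
Proof.
move=> [x Xx] H; apply/andP; split.
  apply: le_trans (proj1 (andP (H x Xx))) _; apply: ub_le_sup => //.
  by exists 1 => z /H /andP[].
by apply: ge_sup; [exists x | move=> z /H /andP[]].
Qed.

Lemma inf_bounds (X : set R) : X !=set0 -> (forall x, X x -> 0 <= x <= 1) ->
  0 <= inf X <= 1.
Proof.
move=> [x Xx] H; apply/andP; split.
  by apply: lb_le_inf; [exists x | move=> z /H /andP[]].
apply: le_trans (proj2 (andP (H x Xx))); apply: ge_inf => //.
by exists 0 => z /H /andP[].
Qed.

Lemma min_lt_foldr i (F : nat -> R) :
  min_lt i F = foldr (fun j acc => Num.min (F j) acc) 1 (iota 0 i).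
Proof.
rewrite /min_lt -(big_mkord xpredT (fun j => F j)) /index_iota subn0.
elim: (iota 0 i) => [|a s IH]; first by rewrite big_nil.
by rewrite big_cons IH.
Qed.

Lemma min_lt0 (F : nat -> R) : min_lt 0 F = 1.
Proof. by rewrite min_lt_foldr. Qed.

Lemma min_lt_le1 i (F : nat -> R) : min_lt i F <= 1.
Proof.
rewrite min_lt_foldr; elim: (iota 0 i) => [|a s IH] //=.
by rewrite ge_min IH orbT.
Qed.

Lemma min_lt_le i (F : nat -> R) j : (j < i)%N -> min_lt i F <= F j.
Proof.
move=> ji; have : j \in iota 0 i by rewrite mem_iota.
rewrite min_lt_foldr; elim: (iota 0 i) => [|a s IH] //=.
rewrite inE ge_min; case/orP=> [/eqP->|/IH->]; by rewrite ?lexx ?orbT.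
Qed.

Lemma min_lt_ge i (F : nat -> R) c : c <= 1 -> (forall j, (j < i)%N -> c <= F j) ->
  c <= min_lt i F.
Proof.
move=> c1 H; rewrite min_lt_foldr.
have : forall j, j \in iota 0 i -> c <= F j by move=> j; rewrite mem_iota /= => /H.
elim: (iota 0 i) => [|a s IH] //= H'.
by rewrite le_min H' ?mem_head //= IH // => j js; apply: H'; rewrite inE js orbT.
Qed.

Lemma min_approx (a b a' b' e : R) : a <= a' + e -> b <= b' + e ->
  Num.min a b <= Num.min a' b' + e.
Proof.
move=> h1 h2; case: (leP a' b') => h3.
  by apply: (le_trans _ h1); rewrite ge_min lexx.
by apply: (le_trans _ h2); rewrite ge_min lexx orbT.
Qed.

Lemma max_approx (a b a' b' e : R) : a <= a' + e -> b <= b' + e ->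
  Num.max a b <= Num.max a' b' + e.
Proof.
move=> h1 h2; rewrite ge_max; apply/andP; split.
  by apply: le_trans h1 _; rewrite lerD2r le_max lexx.
by apply: le_trans h2 _; rewrite lerD2r le_max lexx orbT.
Qed.

Lemma ler_pscale (c a b e : R) : 0 <= c <= 1 -> 0 <= e -> a <= b + e -> c * a <= c * b + e.
Proof.
move=> /andP[c0 c1] e0 h; apply: le_trans (ler_wpM2l c0 h) _.
by rewrite mulrDr lerD2l -[leRHS]mul1r ler_wpM2r.
Qed.

End RealLemmas.

Section QF.
Variables (AP : finType) (R : realType) (K : kripke AP) (m : nat).
Local Open Scope ring_scope.
Local Open Scope classical_set_scope.

Definition Al := {ffun 'I_m -> St K}.
Definition labtr (r : nat -> St K) : trace AP R := fun k p => ratr (lab (r k) p).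
Definition asg (w : nat -> Al) : assignment AP R :=
  fun x => omap (fun i => labtr (fun k => w k i)) (insub x : option 'I_m).

Lemma shift_asg w i : shift (asg w) i = asg (sh w i).
Proof. by apply/funext => x; rewrite /shift /asg; case: insub. Qed.

Lemma shift_asgF w : shift (asg w) = fun i => asg (sh w i).
Proof. by apply/funext => i; exact: shift_asg. Qed.

Definition V (f : qf AP) (w : nat -> Al) : R := qf_sem f (asg w).

Lemma ratr01 (q : rat) : 0 <= q <= 1 -> 0 <= (ratr q : R) <= 1.
Proof.
case/andP=> h1 h2; rewrite ler0q h1 /=.
have : (ratr q <= ratr 1 :> R) by rewrite ler_rat.
by rewrite rmorph1.
Qed.

Lemma lab01 (s : St K) p : 0 <= (ratr (lab s p) : R) <= 1.
Proof. exact/ratr01/lab_range. Qed.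

Lemma eta01 eta i : discounting eta -> 0 <= (ratr (eta i) : R) <= 1.
Proof. by case=> _ [H _]; apply: ratr01; case: (H i) => /ltW -> ->. Qed.

Lemma V_Until g h w : V (Until g h) w = sup [set x | exists i : nat,
  x = Num.min (V h (sh w i)) (min_lt i (fun j => V g (sh w j)))].
Proof. by rewrite /V /= shift_asgF. Qed.

Lemma V_DUntil eta g h w : V (DUntil eta g h) w = sup [set x | exists i : nat,
  x = Num.min (ratr (eta i) * V h (sh w i)) (min_lt i (fun j => ratr (eta j) * V g (sh w j)))].
Proof. by rewrite /V /= shift_asgF. Qed.

Lemma V_bounds f : qf_wf f -> forall w, 0 <= V f w <= 1.
Proof.
elim: f => [p pi|g IH|g IHg h IHh|g IH|g IHg h IHh|eta g IHg h IHh] /= wf w.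
- by rewrite /V /= /asg; case: insub => //= [i|]; rewrite ?lab01 ?lexx ?ler01.
- by rewrite /V /=; case/andP: (IH wf w) => h1 h2; rewrite subr_ge0 h2 lerBlDr lerDl h1.
- case: wf => w1 w2; rewrite /V /= le_max ge_max.
  by case/andP: (IHg w1 w) => -> ->; case/andP: (IHh w2 w) => -> ->.
- by rewrite /V /= shift_asg; exact: IH.
- case: wf => w1 w2; rewrite V_Until; apply: sup_bounds; first by exists (Num.min (V h (sh w 0)) (min_lt 0 (fun j => V g (sh w j)))); exists 0%N.
  move=> x [i ->]; rewrite le_min ge_min min_lt_le1 orbT andbT.
  case/andP: (IHh w2 (sh w i)) => -> _ /=; apply: min_lt_ge => // j _.
  by case/andP: (IHg w1 (sh w j)).
- case: wf => we [w1 w2]; rewrite V_DUntil; apply: sup_bounds; first by eexists; exists 0%N.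
  move=> x [i ->]; rewrite le_min ge_min min_lt_le1 orbT andbT.
  case/andP: (eta01 i we) => e0 e1; case/andP: (IHh w2 (sh w i)) => v0 v1.
  rewrite mulr_ge0 //=; apply: min_lt_ge => // j _.
  by case/andP: (eta01 j we) => f0 _; case/andP: (IHg w1 (sh w j)) => g0 _; rewrite mulr_ge0.
Qed.

End QF.

Section QFRec.
Variables (AP : finType) (R : realType) (K : kripke AP) (m : nat).
Local Open Scope ring_scope.
Local Open Scope classical_set_scope.
Notation VV := (@V AP R K m).
Notation AL := (Al K m).

Lemma beq_head (w w' : nat -> AL) : beq (fun u : seq AL => ohead u) w w' -> w 0%N = w' 0%N.
Proof.
case=> p [p' [[p0 pi] [p0' pi'] H]]; move: (H 0%N); rewrite p0 p0' /slice !subn0.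
move: (pi 0%N) (pi' 0%N); rewrite p0 p0'.
by case: (p 1%N) => // n _; case: (p' 1%N) => // n' _ /= [].
Qed.

Lemma eta_mono eta N i : discounting eta -> (N <= i)%N -> eta i <= eta N.
Proof.
case=> dec _; elim: i => [|i IH]; first by rewrite leqn0 => /eqP->.
rewrite leq_eqVlt => /orP[/eqP->//|]; rewrite ltnS => /IH.
by apply: le_trans; apply: ltW.
Qed.

Lemma qf_recog f : qf_wf f -> forall eps : R, 0 < eps -> recog (VV f) eps.
Proof.
elim: f => [p pi|g IH|g IHg h IHh|g IH|g IHg h IHh|eta g IHg h IHh] /= wf eps e0.
- exists _, (fun u : seq AL => ohead u) => w w' /beq_head e.
  rewrite /V /= /asg; case: insub => //= [i|]; rewrite /labtr /= ?e; lra.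
- have [S [hh H]] := IH wf eps e0; exists S, hh => w w' /beq_sym /H.
  rewrite /V /=; lra.
- case: wf => w1 w2.
  have [S1 [h1 H1]] := IHg w1 eps e0; have [S2 [h2 H2]] := IHh w2 eps e0.
  exists _, (fun u => (h1 u, h2 u)) => w w' hb.
  rewrite /V /=; apply: max_approx.
    exact: (H1 _ _ (beq_map fst hb)).
  exact: (H2 _ _ (beq_map snd hb)).
- have [S [hh H]] := IH wf eps e0; exists _, (hN hh 2) => w w' hb.
  rewrite /V /= !shift_asg; exact: (H _ _ (posP hb (isT : (1 < 2)%N))).
- case: wf => w1 w2.
  have [S1 [h1 H1]] := IHg w1 eps e0; have [S2 [h2 H2]] := IHh w2 eps e0.
  exists _, (hU (fun u => (h1 u, h2 u))) => w w' hb.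
  rewrite !V_Until; apply: sup_approx.
  + by eexists; exists 0%N.
  + by eexists; exists 0%N.
  + by move=> y [i ->]; rewrite ge_min min_lt_le1 orbT.
  + move=> x [i ->]; have [i' [b1 b2]] := untilP hb i.
    eexists; first by exists i'.
    apply: min_approx; first exact: (H2 _ _ (beq_map snd b1)).
    rewrite -lerBlDr; apply: min_lt_ge.
      by have := min_lt_le1 i (fun j => VV g (sh w j)); lra.
    move=> j' hj'; have [j [ji bj]] := b2 j' hj'.
    rewrite lerBlDr; apply: le_trans (min_lt_le _ ji) _.
    exact: (H1 _ _ (beq_map fst bj)).
- case: wf => we [w1 w2].
  have [k hk] : exists k : nat, 0 + k.+1%:R^-1 < eps / 2 by apply: ltr_add_invr; lra.
  have [N hN'] : exists N, (N <= N)%N /\ eta N < k.+1%:R^-1.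
    case: we => _ [_ lim]; have [N HN] := lim (k.+1%:R^-1) (ltac:(by rewrite invr_gt0 ltr0n)).
    by exists N; split => //; apply: HN.
  have etaN : ratr (eta N) < eps / 2 :> R.
    apply: lt_trans _ hk; rewrite add0r -(ratr_nat R k.+1) -fmorphV ltr_rat.
    exact: (proj2 hN').
  have e2 : 0 < eps / 2 by lra.
  have [S1 [h1 H1]] := IHg w1 _ e2; have [S2 [h2 H2]] := IHh w2 _ e2.
  exists _, (hN (fun u => (h1 u, h2 u)) N) => w w' hb.
  rewrite !V_DUntil; apply: sup_approx.
  + by eexists; exists 0%N.
  + by eexists; exists 0%N.
  + by move=> y [i ->]; rewrite ge_min min_lt_le1 orbT.
  + move=> x [i ->].
    case: (ltnP i N) => iN.
      eexists; first by exists i.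
      suff : Num.min (ratr (eta i) * VV h (sh w i))
          (min_lt i (fun j => ratr (eta j) * VV g (sh w j))) <=
        Num.min (ratr (eta i) * VV h (sh w' i))
          (min_lt i (fun j => ratr (eta j) * VV g (sh w' j))) + eps / 2 by lra.
      apply: min_approx.
        apply: ler_pscale; [exact: eta01 R _ _ we | lra |].
        exact: (H2 _ _ (beq_map snd (posP hb iN))).
      rewrite -lerBlDr; apply: min_lt_ge.
        by have := min_lt_le1 i (fun j => ratr (eta j) * VV g (sh w j)); lra.
      move=> j ji; rewrite lerBlDr; apply: le_trans (min_lt_le _ ji) _.
      apply: ler_pscale; [exact: eta01 R _ _ we | lra |].
      exact: (H1 _ _ (beq_map fst (posP hb (ltn_trans ji iN)))).
    eexists; first by exists 0%N.
    rewrite min_lt0.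
    have v0 : 0 <= ratr (eta 0%N) * VV h (sh w' 0) <= 1.
      case/andP: (eta01 R 0 we) => a1 a2; case/andP: (V_bounds R w2 (sh w' 0)) => b1 b2.
      by rewrite mulr_ge0 //= mulr_ile1.
    have v1 : ratr (eta i) * VV h (sh w i) <= ratr (eta N).
      case/andP: (eta01 R i we) => a1 a2; case/andP: (V_bounds R w2 (sh w i)) => b1 b2.
      apply: le_trans (_ : ratr (eta i) <= _); last by rewrite ler_rat eta_mono.
      by rewrite -[leRHS]mulr1 ler_wpM2l.
    have v2 : Num.min (ratr (eta i) * VV h (sh w i)) (min_lt i (fun j => ratr (eta j) * VV g (sh w j))) <= ratr (eta i) * VV h (sh w i).
      by rewrite ge_min lexx.
    have : Num.min (ratr (eta 0%N) * VV h (sh w' 0)) 1 = ratr (eta 0%N) * VV h (sh w' 0).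
      by apply/min_idPl; case/andP: v0.
    move=> ->; move: v0 => /andP[v0 _]; lra.
Qed.

End QFRec.

Section HF.
Variables (AP : finType) (R : realType) (K : kripke AP) (m : nat).
Local Open Scope ring_scope.
Local Open Scope classical_set_scope.
Notation AL := (Al K m).
Notation VV := (@V AP R K m).
Notation ST := (St K).

Definition valid (s : nat -> ST) := s 0%N \in init K /\ forall i, trans (s i) (s i.+1).
Definition updw (w : nat -> AL) (i : 'I_m) (s : nat -> ST) : nat -> AL :=
  fun k => [ffun j => if j == i then s k else w k j].

Lemma traces_run (t : trace AP R) : traces_of R K t <-> exists s, valid s /\ t = labtr R s.
Proof.
split=> [[s [h1 [h2 h3]]]|[s [[h1 h2] ->]]]; exists s => //.
by split => //; apply/funext => k; apply/funext => q; rewrite h3.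
Qed.

Lemma update_asg w (i : 'I_m) s : update (asg R w) (val i) (labtr R s) = asg R (updw w i s).
Proof.
apply/funext => x; rewrite /update /asg; case: eqP => [->|ne].
  rewrite valK /=; congr Some; apply/funext => k; apply/funext => q.
  by rewrite /labtr /updw ffunE eqxx.
case: insubP => //= j _ ej; congr Some; apply/funext => k; apply/funext => q.
rewrite /labtr /updw ffunE; case: eqP => // eji; case: ne; by rewrite -ej eji.
Qed.

Definition Vh (g : hform AP) (w : nat -> AL) : R := sem (traces_of R K) g (asg R w).

Fixpoint qbound (g : hform AP) : Prop :=
  match g with Forall pi g | Exists pi g => (pi < m)%N /\ qbound g | QF _ => True end.

Lemma Vh_Forall pi g w (hpi : (pi < m)%N) : Vh (Forall pi g) w =
  inf [set x | exists2 s, valid s & x = Vh g (updw w (Ordinal hpi) s)].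
Proof.
rewrite /Vh /=; congr inf; apply/seteqP; split => x /=.
  case=> t /traces_run [s [vs ->]] ->; exists s => //.
  by rewrite -update_asg.
case=> s vs ->; exists (labtr R s); first by apply/traces_run; exists s.
by rewrite -[pi]/(val (Ordinal hpi)) update_asg.
Qed.

Lemma Vh_Exists pi g w (hpi : (pi < m)%N) : Vh (Exists pi g) w =
  sup [set x | exists2 s, valid s & x = Vh g (updw w (Ordinal hpi) s)].
Proof.
rewrite /Vh /=; congr sup; apply/seteqP; split => x /=.
  case=> t /traces_run [s [vs ->]] ->; exists s => //.
  by rewrite -update_asg.
case=> s vs ->; exists (labtr R s); first by apply/traces_run; exists s.
by rewrite -[pi]/(val (Ordinal hpi)) update_asg.
Qed.

Lemma valid_ex : exists s, valid s.
Proof.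
have [x0 x0i] : exists x, x \in init K by apply/set0Pn; exact: init_nonempty.
pose nxt (x : ST) := xchoose (trans_total x).
exists (fun k => iter k nxt x0); split => // k /=.
exact: (xchooseP (trans_total _)).
Qed.

Lemma Vh_bounds g : hform_wf g -> qbound g -> forall w, 0 <= Vh g w <= 1.
Proof.
have [s0 vs0] := valid_ex.
elim: g => [pi g IH|pi g IH|f] /= wf.
- case=> hpi qb w; rewrite Vh_Forall; apply: inf_bounds.
    by eexists; exists s0.
  by move=> x [s _ ->]; apply: IH.
- case=> hpi qb w; rewrite Vh_Exists; apply: sup_bounds.
    by eexists; exists s0.
  by move=> x [s _ ->]; apply: IH.
- by move=> _ w; exact: V_bounds.
Qed.

Definition zipw (u : seq AL) (i : 'I_m) (t : seq ST) : seq AL :=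
  [seq ([ffun j => if j == i then x.2 else x.1 j] : AL) | x : AL * ST <- zip u t].
Definition olast (t : seq ST) := if t is x :: t' then Some (last x t') else None.
Definition vpath (t : seq ST) : Prop :=
  forall d j, (j.+1 < size t)%N -> trans (nth d t j) (nth d t j.+1).
Definition Hc (S : finType) (h : seq AL -> S) (i : 'I_m) (u : seq AL)
  : {set S * option ST * option ST} :=
  [set x | `[< exists t, [/\ size t = size u, vpath t & x = (h (zipw u i t), ohead t, olast t)] >]].

Lemma slice_updw w i s a b : slice (updw w i s) a b = zipw (slice w a b) i (slice s a b).
Proof. by rewrite /zipw /slice zip_map -map_comp. Qed.

Lemma vpath_slice s a b : (forall i, trans (s i) (s i.+1)) -> vpath (slice s a b).
Proof.
move=> H d j hj; rewrite size_slice in hj.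
rewrite !(nth_map 0%N) ?size_iota // ?(ltnW hj) // !nth_iota // ?(ltnW hj) //.
by rewrite addnS; apply: H.
Qed.

Lemma ohead_nth (t : seq ST) d : (0 < size t)%N -> ohead t = Some (nth d t 0).
Proof. by case: t. Qed.

Lemma olast_nth (t : seq ST) d : (0 < size t)%N -> olast t = Some (nth d t (size t).-1).
Proof. by case: t => //= x t _; rewrite (set_nth_default x) ?nth_last. Qed.

Lemma block_uniq p k l n : factor p -> (p k <= n < p k.+1)%N -> (p l <= n < p l.+1)%N -> k = l.
Proof.
move=> fp /andP[k1 k2] /andP[l1 l2]; case: (ltngtP k l) => // kl.
  have := factor_lemono fp kl; move=> h; have := leq_trans k2 (leq_trans h l1).
  by rewrite ltnn.
have := factor_lemono fp kl; move=> h; have := leq_trans l2 (leq_trans h k1).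
by rewrite ltnn.
Qed.

Lemma slice_nthE (f : nat -> ST) a b t d : size t = (b - a)%N ->
  (forall n, (a <= n < b)%N -> f n = nth d t (n - a)) -> slice f a b = t.
Proof.
move=> st H; apply: (@eq_from_nth _ d); rewrite ?size_slice // => j hj.
rewrite (nth_map 0%N) ?size_iota // nth_iota // H ?addKn //.
by rewrite leq_addr /= -ltn_subRL.
Qed.

Lemma proj_step (S : finType) (h : seq AL -> S) (i : 'I_m) (w w' : nat -> AL) (s : nat -> ST) :
  beq (Hc h i) w w' -> valid s -> exists s', valid s' /\ beq h (updw w i s) (updw w' i s').
Proof.
case=> p [p' [fp fp' H]] [s0 sv].
have ne k : (0 < p k.+1 - p k)%N by rewrite subn_gt0; apply: (proj2 fp).
have ne' k : (0 < p' k.+1 - p' k)%N by rewrite subn_gt0; apply: (proj2 fp').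
have ex k : exists t, [/\ size t = (p' k.+1 - p' k)%N, vpath t &
    (h (zipw (slice w (p k) (p k.+1)) i (slice s (p k) (p k.+1))),
     ohead (slice s (p k) (p k.+1)), olast (slice s (p k) (p k.+1))) =
    (h (zipw (slice w' (p' k) (p' k.+1)) i t), ohead t, olast t)].
  have : (h (zipw (slice w (p k) (p k.+1)) i (slice s (p k) (p k.+1))),
     ohead (slice s (p k) (p k.+1)), olast (slice s (p k) (p k.+1)))
      \in Hc h i (slice w (p k) (p k.+1)).
    rewrite inE; apply/asboolP; exists (slice s (p k) (p k.+1)); split => //.
      by rewrite !size_slice.
    exact: vpath_slice.
  rewrite H inE => /asboolP [t [st vt e]]; exists t; split => //.
  by rewrite st size_slice.
have [tt htt] := choice ex.
have [bi hbi] := choice (factor_block fp').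
pose d := s 0%N.
pose s' n := nth d (tt (bi n)) (n - p' (bi n)).
have bik k n : (p' k <= n < p' k.+1)%N -> bi n = k.
  by move=> hn; apply: (block_uniq fp' (hbi n) hn).
have sl k : slice s' (p' k) (p' k.+1) = tt k.
  apply: slice_nthE; first by case: (htt k).
  by move=> n hn; rewrite /s' (bik k n hn).
have hd k : nth d (tt k) 0 = s (p k).
  case: (htt k) => st _ [_ e1 _].
  move: e1; rewrite (ohead_nth d) ?size_slice // (ohead_nth d) ?st //.
  by case=> <-; rewrite (nth_map 0%N) ?size_iota // nth_iota // addn0.
have tl k : nth d (tt k) (size (tt k)).-1 = s (p k.+1).-1.
  case: (htt k) => st _ [_ _ e1].
  move: e1; rewrite (olast_nth d) ?size_slice // (olast_nth d) ?st //.
  case=> <-; rewrite (nth_map 0%N) ?size_iota ?prednK ?leqnn //.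
  rewrite nth_iota ?prednK //; congr s.
  rewrite -subn1 addnBA // subnKC; first by rewrite subn1.
  by apply: ltnW; apply: (proj2 fp).
exists s'; split.
- split.
    rewrite /s' (bik 0%N 0%N); last by rewrite (proj1 fp') leqnn /=; move: (proj2 fp' 0%N); rewrite (proj1 fp').
    by rewrite (proj1 fp') subn0 hd (proj1 fp).
  move=> n; have /andP[n1 n2] := hbi n; set k := bi n in n1 n2 *.
  case: (ltnP n.+1 (p' k.+1)) => hn.
    rewrite /s' (bik k n.+1); last by rewrite hn andbT; apply: leq_trans n1 _.
    rewrite -/k subSn //; case: (htt k) => st vt _; apply: vt.
    by rewrite st -subSn // ltn_sub2r // (leq_ltn_trans n1).
  have e : p' k.+1 = n.+1 by apply/eqP; rewrite eqn_leq hn n2.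
  rewrite /s' (bik k.+1 n.+1); last by rewrite e leqnn /= -e; apply: (proj2 fp').
  rewrite -/k e subnn hd.
  have -> : (n - p' k)%N = (size (tt k)).-1.
    by case: (htt k) => st _ _; rewrite st e subSKn.
  rewrite tl; have := sv (p k.+1).-1; rewrite prednK //.
  by apply: leq_ltn_trans (proj2 fp k); apply: leq0n.
- exists p, p'; split => // k; rewrite !slice_updw sl.
  by case: (htt k) => _ _ /(congr1 (fun x => x.1.1)).
Qed.

Lemma hf_recog g : hform_wf g -> qbound g -> forall eps : R, 0 < eps -> recog (Vh g) eps.
Proof.
have [s0 vs0] := valid_ex.
elim: g => [pi g IH|pi g IH|f] /= wf.
- case=> hpi qb eps e0; have [S [h Hh]] := IH wf qb eps e0.
  exists _, (Hc h (Ordinal hpi)) => w w' hb; rewrite !Vh_Forall.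
  apply: inf_approx.
  + by eexists; exists s0.
  + by eexists; exists s0.
  + by move=> x [s _ ->]; case/andP: (Vh_bounds wf qb (updw w (Ordinal hpi) s)).
  + move=> y [s' vs' ->]; have [s [vs hb']] := proj_step (beq_sym hb) vs'.
    eexists; first by exists s.
    exact: (Hh _ _ (beq_sym hb')).
- case=> hpi qb eps e0; have [S [h Hh]] := IH wf qb eps e0.
  exists _, (Hc h (Ordinal hpi)) => w w' hb; rewrite !Vh_Exists.
  apply: sup_approx.
  + by eexists; exists s0.
  + by eexists; exists s0.
  + by move=> x [s _ ->]; case/andP: (Vh_bounds wf qb (updw w' (Ordinal hpi) s)).
  + move=> x [s vs ->]; have [s' [vs' hb']] := proj_step hb vs.
    eexists; first by exists s'.
    exact: (Hh _ _ hb').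
- by move=> _ eps e0; exact: qf_recog.
Qed.

End HF.

Definition eperiodic (T : Type) (f : nat -> T) :=
  exists U P, (0 < P)%N /\ forall k, (U <= k)%N -> f (k + P)%N = f k.

Lemma eper_mul (T : Type) (f : nat -> T) U P :
  (forall k, (U <= k)%N -> f (k + P)%N = f k) ->
  forall n k, (U <= k)%N -> f (k + n * P)%N = f k.
Proof.
move=> H; elim=> [|n IH] k hk; first by rewrite mul0n addn0.
rewrite mulSnr addnA H ?IH //; exact: leq_trans hk (leq_addr _ _).
Qed.

Lemma eper_mod (T : Type) (f : nat -> T) U P : (0 < P)%N ->
  (forall k, (U <= k)%N -> f (k + P)%N = f k) ->
  forall k, (U <= k)%N -> f k = f (U + (k - U) %% P)%N.
Proof.
move=> P0 H k hk.
have e : k = ((U + (k - U) %% P) + (k - U) %/ P * P)%N.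
  by rewrite -addnA (addnC _ (_ * _)) -divn_eq subnKC.
by rewrite {1}e (eper_mul H) // leq_addr.
Qed.

Lemma is_lasso_per (AP : finType) (R : realType) (t : trace AP R) : eperiodic t -> is_lasso t.
Proof.
case=> U [P [P0 H]].
exists [seq t k | k <- iota 0 U], [seq t k | k <- iota U P]; split.
  by rewrite -size_eq0 size_map size_iota -lt0n.
move=> i; rewrite !size_map !size_iota; case: ltnP => hi.
  by rewrite (nth_map 0%N) ?size_iota // nth_iota.
rewrite (nth_map 0%N) ?size_iota ?ltn_pmod // nth_iota ?ltn_pmod //.
exact: (eper_mod P0 H hi).
Qed.

Section Lasso.
Variables (AP : finType) (R : realType) (K : kripke AP).
Notation ST := (St K).

Definition prd (s : nat -> ST) a1 a2 : nat -> ST :=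
  fun k => if (k < a1)%N then s k else s (a1 + (k - a1) %% (a2 - a1))%N.

Lemma prd_lt s a1 a2 k : (a1 < a2)%N -> (k < a2)%N -> prd s a1 a2 k = s k.
Proof.
move=> h12 hk; rewrite /prd; case: ltnP => // h1.
by rewrite modn_small ?subnKC // ltn_sub2r.
Qed.

Lemma prd_ge s a1 a2 k : (a1 <= k)%N -> prd s a1 a2 k = s (a1 + (k - a1) %% (a2 - a1))%N.
Proof. by move=> hk; rewrite /prd ltnNge hk. Qed.

Lemma prd_valid s a1 a2 : valid s -> (a1 < a2)%N -> s a1 = s a2 -> valid (prd s a1 a2).
Proof.
case=> s0 sv h12 e; split; first by rewrite prd_lt // (leq_ltn_trans _ h12).
move=> k; case: (ltnP k.+1 a2) => hk.
  by rewrite !prd_lt // ltnW.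
have k1 : (a1 <= k)%N by rewrite -ltnS (leq_trans h12 hk).
rewrite !prd_ge ?(leq_trans k1) // subSn //.
set d := (a2 - a1)%N; have d0 : (0 < d)%N by rewrite subn_gt0.
set j := ((k - a1) %% d)%N.
have jd : (j < d)%N by rewrite ltn_pmod.
have -> : ((k - a1).+1 %% d = j.+1 %% d)%N by rewrite -addn1 -modnDml addn1.
suff -> : s (a1 + j.+1 %% d)%N = s (a1 + j).+1 by apply: sv.
case: (ltngtP j.+1 d) => hj.
- by rewrite modn_small // addnS.
- by move: hj; rewrite ltnNge jd.
- by rewrite hj modnn addn0 -addnS hj subnKC // ltnW.
Qed.

Lemma prd_per s a1 a2 : (a1 < a2)%N -> eperiodic (prd s a1 a2).
Proof.
move=> h12; exists a1, (a2 - a1)%N; split; first by rewrite subn_gt0.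
move=> k hk; rewrite !prd_ge ?(leq_trans hk) ?leq_addr //.
by rewrite -addnBAC // modnDr.
Qed.

Lemma lasso_of_run (s : nat -> ST) : valid s -> eperiodic s -> lassos_of R K (labtr R s).
Proof.
move=> vs [U [P [P0 H]]]; split; first by apply/traces_run; exists s.
apply: is_lasso_per; exists U, P; split => // k hk.
by rewrite /labtr H.
Qed.

Lemma lasso_run t : lassos_of R K t -> exists s : nat -> ST, [/\ valid s, eperiodic s & t = labtr R s].
Proof.
case=> /traces_run [s [vs et]] [u [v [nv Ht]]].
set su := size u; set sv := size v.
have sv0 : (0 < sv)%N by rewrite lt0n size_eq0.
have tper : forall k, (su <= k)%N -> t (k + sv)%N = t k.
  move=> k hk; rewrite !Ht ltnNge (leq_trans hk (leq_addr _ _)) /= ltnNge hk /=.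
  by rewrite -/su -/sv addnC -addnBA // modnDl.
pose f (k : 'I_#|ST|.+1) := s (su + k * sv)%N.
have [k1 [k2 [ne e]]] : exists k1 k2, k1 != k2 /\ f k1 = f k2.
  apply: contrapT => H.
  have inj : injective f.
    move=> x y exy; apply/eqP; apply: contrapT => nxy; apply: H.
    by exists x, y; split => //; apply/negP.
  by have := @leq_card _ _ f inj; rewrite card_ord ltnn.
have main : forall a b : nat, (a < b)%N ->
    s (su + a * sv)%N = s (su + b * sv)%N ->
    exists s0 : nat -> ST, [/\ valid s0, eperiodic s0 & t = labtr R s0].
  move=> a b ab esab.
  set a1 := (su + a * sv)%N; set a2 := (su + b * sv)%N.
  have h12 : (a1 < a2)%N by rewrite ltn_add2l ltn_pmul2r.
  exists (prd s a1 a2); split; [exact: prd_valid|exact: prd_per|].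
  apply/funext => k; apply/funext => q; case: (ltnP k a1) => hk.
    by rewrite /labtr prd_lt ?(ltn_trans hk) // et.
  rewrite /labtr prd_ge //.
  have d_eq : (a2 - a1 = (b - a) * sv)%N by rewrite subnDl mulnBl.
  have -> : t k = t (a1 + (k - a1) %% (a2 - a1))%N.
    have e2 : k = ((a1 + (k - a1) %% (a2 - a1)) + ((k - a1) %/ (a2 - a1) * (b - a)) * sv)%N.
      by rewrite -mulnA -d_eq -addnA (addnC _ (_ * _)) -divn_eq subnKC.
    rewrite {1}e2 (eper_mul tper) //; apply: leq_trans (leq_addr _ _); exact: leq_addr.
  by rewrite et /labtr.
case: (ltngtP k1 k2) => hk.
- exact: main hk e.
- by apply: main hk _; rewrite -/(f k2) -e.
- by move: ne; rewrite (val_inj hk) eqxx.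
Qed.

End Lasso.

Lemma slice_shiftE (A : finType) (f g : nat -> A) a b a' b' :
  (b - a = b' - a')%N -> (forall j, (j < b - a)%N -> f (a + j)%N = g (a' + j)%N) ->
  slice f a b = slice g a' b'.
Proof.
move=> e H; rewrite /slice -e.
have -> : iota a (b - a) = [seq (a + j)%N | j <- iota 0 (b - a)] by rewrite -iotaDl addn0.
have -> : iota a' (b - a) = [seq (a' + j)%N | j <- iota 0 (b - a)] by rewrite -iotaDl addn0.
rewrite -!map_comp; apply/eq_in_map => j; rewrite mem_iota add0n => /andP[_ hj] /=.
exact: H.
Qed.

Section LStep.
Variables (AP : finType) (R : realType) (K : kripke AP) (m : nat).
Notation AL := (Al K m).
Notation ST := (St K).

Lemma lasso_step (S : finType) (h : seq AL -> S) (i : 'I_m) (w : nat -> AL) (s : nat -> ST) :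
  eperiodic w -> valid s ->
  exists s' : nat -> ST, [/\ valid s', eperiodic s' & beq h (updw w i s) (updw w i s')].
Proof.
case=> U [P [P0 HP]] vs.
set z := updw w i s.
pose f a := (s a, Ordinal (ltn_pmod a P0)).
pose c a b := (h (slice z a b), f a, f b).
have [q [qinc [e he]]] := ramsey c.
have qge k : (k <= q k)%N.
  elim: k => // k IH; exact: leq_ltn_trans IH (qinc k).
pose Q k := q (k + U).+1.
have Qinc k : (Q k < Q k.+1)%N by rewrite /Q addSn; apply: qinc.
have QU k : (U < Q k)%N by apply: leq_trans (qge _); rewrite ltnS leq_addl.
have hQ k l : (k < l)%N -> c (Q k) (Q l) = e by move=> kl; apply: he; rewrite ltnS ltn_add2r.
set a1 := Q 0%N; set a2 := Q 1%N.
have h12 : (a1 < a2)%N := Qinc 0%N.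
have fa : f a1 = f a2.
  have := congr1 (fun x => x.1.2) (hQ 1%N 2%N isT); rewrite -(hQ 0%N 1%N isT) /= => ->.
  done.
have sa : s a1 = s a2 := congr1 fst fa.
have ma : (a1 %% P = a2 %% P)%N := congr1 (fun x => val x.2) fa.
set d := (a2 - a1)%N.
have d0 : (0 < d)%N by rewrite subn_gt0.
have Pd : (P %| d)%N by rewrite -eqn_mod_dvd ?(ltnW h12) // ma.
exists (prd s a1 a2); split; [exact: prd_valid | exact: prd_per |].
pose p k := if k is k'.+1 then Q k' else 0%N.
pose p' k := if k is k'.+1 then (a1 + k' * d)%N else 0%N.
exists p, p'; split.
- split => // [[|k]] //=; exact: (leq_ltn_trans _ (QU 0%N)).
- split => // [[|k]] /=; first by rewrite mul0n addn0; exact: (leq_ltn_trans _ (QU 0%N)).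
  by rewrite ltn_add2l mulSnr -[X in (X < _)%N]addn0 ltn_add2l.
- case=> [|k] /=.
    congr h; apply: slice_shiftE; first by rewrite mul0n addn0.
    move=> j hj; rewrite !add0n /z /updw; apply/ffunP => x; rewrite !ffunE.
    by rewrite prd_lt // (ltn_trans _ h12) // -(subn0 a1).
  transitivity (h (slice z a1 a2)).
    have := congr1 (fun x => x.1.1) (hQ k k.+1 (ltnSn k)).
    by rewrite -(congr1 (fun x => x.1.1) (hQ 0%N 1%N isT)) /=.
  congr h; apply: slice_shiftE.
    by rewrite subnDl mulSnr addKn.
  move=> j hj; rewrite /z /updw; apply/ffunP => x; rewrite !ffunE.
  rewrite prd_ge; last by rewrite -addnA leq_addr.
  rewrite -addnA addKn -/d modnMDl (modn_small hj).
  case: eqP => // _.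
  rewrite (addnC (k * d)) addnA -(divnK Pd) mulnA (eper_mul HP) //.
  by apply: leq_trans (ltnW (QU 0%N)) (leq_addr _ _).
Qed.

End LStep.

Section Coinc.
Variables (AP : finType) (R : realType).
Local Open Scope ring_scope.
Local Open Scope classical_set_scope.

Lemma qf_coinc (f : qf AP) : forall Pi1 Pi2 : assignment AP R,
  (forall x, qf_fv f x -> Pi1 x = Pi2 x) -> qf_sem f Pi1 = qf_sem f Pi2.
Proof.
elim: f => [p pi|g IH|g IHg h IHh|g IH|g IHg h IHh|eta g IHg h IHh] Pi1 Pi2 H /=.
- by rewrite H //= eqxx.
- by rewrite (IH Pi1 Pi2 H).
- rewrite (IHg Pi1 Pi2) ?(IHh Pi1 Pi2) // => x hx; apply: H; apply/orP; by [left|right].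
- by rewrite (IH (shift Pi1 1) (shift Pi2 1)) // => x hx; rewrite /shift H.
- have E1 i : qf_sem h (shift Pi1 i) = qf_sem h (shift Pi2 i).
    by apply: IHh => x hx; rewrite /shift H //; apply/orP; right.
  have E2 : (fun j => qf_sem g (shift Pi1 j)) = (fun j => qf_sem g (shift Pi2 j)).
    by apply/funext => j; apply: IHg => x hx; rewrite /shift H //; apply/orP; left.
  by congr sup; apply/seteqP; split => x [i ->]; exists i; rewrite ?E1 ?E2.
- have E1 i : qf_sem h (shift Pi1 i) = qf_sem h (shift Pi2 i).
    by apply: IHh => x hx; rewrite /shift H //; apply/orP; right.
  have E2 : (fun j => ratr (eta j) * qf_sem g (shift Pi1 j)) =
            (fun j => ratr (eta j) * qf_sem g (shift Pi2 j)).
    by apply/funext => j; rewrite (IHg (shift Pi1 j) (shift Pi2 j)) // => x hx; rewrite /shift H //; apply/orP; left.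
  by congr sup; apply/seteqP; split => x [i ->]; exists i; rewrite ?E1 ?E2.
Qed.

Lemma sem_coinc (T : set (trace AP R)) (g : hform AP) : forall Pi1 Pi2 : assignment AP R,
  (forall x, hform_fv g x -> Pi1 x = Pi2 x) -> sem T g Pi1 = sem T g Pi2.
Proof.
have upd pi (Pi1 Pi2 : assignment AP R) t (g' : hform AP) :
   (forall x, (pi != x) && hform_fv g' x -> Pi1 x = Pi2 x) ->
   forall x, hform_fv g' x -> update Pi1 pi t x = update Pi2 pi t x.
  move=> H x hx; rewrite /update; case: eqP => // ne; apply: H; rewrite hx andbT.
  by apply/eqP => e; apply: ne; rewrite e.
elim: g => [pi g IH|pi g IH|f] Pi1 Pi2 H /=.
- congr inf; apply/seteqP; split => x [t Tt ->]; exists t => //.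
    by apply: IH; apply: upd.
  by apply: esym; apply: IH; apply: upd => y hy; rewrite H.
- congr sup; apply/seteqP; split => x [t Tt ->]; exists t => //.
    by apply: IH; apply: upd.
  by apply: esym; apply: IH; apply: upd => y hy; rewrite H.
- exact: qf_coinc.
Qed.
End Coinc.

Fixpoint hvars (AP : Type) (m : nat) (g : hform AP) : Prop :=
  match g with
  | Forall pi g | Exists pi g => (pi < m)%N /\ hvars m g
  | QF f => forall x, qf_fv f x -> (x < m)%N
  end.

Lemma hvars_qbound (AP : finType) (R : realType) (K : kripke AP) m (g : hform AP) :
  hvars m g -> qbound m g.
Proof. by elim: g => //= pi g IH [? /IH]. Qed.

Lemma hvars_fv (AP : Type) m (g : hform AP) x : hvars m g -> hform_fv g x -> (x < m)%N.
Proof.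
elim: g => [pi g IH|pi g IH|f] /=; try by case=> _ /IH H /andP[_ /H].
by move=> H /H.
Qed.

Lemma qf_ex (AP : Type) (f : qf AP) : exists m, forall x, qf_fv f x -> (x < m)%N.
Proof.
elim: f => [p pi|g [m H]|g [m1 H1] h [m2 H2]|g [m H]|g [m1 H1] h [m2 H2]|eta g [m1 H1] h [m2 H2]] /=.
- by exists pi.+1 => x /eqP <-.
- by exists m.
- exists (maxn m1 m2) => x /orP[/H1|/H2] hx; rewrite leq_max hx ?orbT //.
- by exists m.
- exists (maxn m1 m2) => x /orP[/H1|/H2] hx; rewrite leq_max hx ?orbT //.
- exists (maxn m1 m2) => x /orP[/H1|/H2] hx; rewrite leq_max hx ?orbT //.
Qed.

Lemma hvars_mono (AP : Type) m m' (g : hform AP) : (m <= m')%N -> hvars m g -> hvars m' g.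
Proof.
move=> mm'; elim: g => [pi g IH|pi g IH|f] /=.
- by case=> h1 /IH h2; split => //; exact: leq_trans h1 mm'.
- by case=> h1 /IH h2; split => //; exact: leq_trans h1 mm'.
- by move=> H x /H h; exact: leq_trans h mm'.
Qed.

Lemma hvars_ex (AP : Type) (g : hform AP) : exists m, hvars m g.
Proof.
elim: g => [pi g [m H]|pi g [m H]|f] /=; last exact: qf_ex.
- exists (maxn m pi.+1); split; first by rewrite leq_max leqnn orbT.
  by apply: hvars_mono H; rewrite leq_max leqnn.
- exists (maxn m pi.+1); split; first by rewrite leq_max leqnn orbT.
  by apply: hvars_mono H; rewrite leq_max leqnn.
Qed.

Lemma eper_ffun m (T : finType) (c : 'I_m -> nat -> T) :
  (forall j, eperiodic (c j)) -> eperiodic (fun k => [ffun j => c j k]).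
Proof.
move=> H.
have H2 : forall j, exists UP : nat * nat, (0 < UP.2)%N /\
    forall k, (UP.1 <= k)%N -> c j (k + UP.2)%N = c j k.
  by move=> j; case: (H j) => U [P HP]; exists (U, P).
have [g hg] := choice H2.
exists (\max_j (g j).1), (\prod_j (g j).2); split.
  by apply: prodn_gt0 => j; case: (hg j).
move=> k hk; apply/ffunP => j; rewrite !ffunE.
rewrite (bigD1 j) //= mulnC; case: (hg j) => _ Hj; apply: (eper_mul Hj).
apply: (leq_trans _ hk); exact: (@leq_bigmax _ (fun j => (g j).1) j).
Qed.

Section MainProof.
Variables (AP : finType) (R : realType) (K : kripke AP).
Local Open Scope ring_scope.
Local Open Scope classical_set_scope.
Notation TT := (traces_of R K).
Notation LL := (lassos_of R K).

Lemma setup (m : nat) pi (g : hform AP) (Pi : assignment AP R) (hpi : (pi < m)%N) :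
  hvars m g ->
  (forall x, (pi != x) && hform_fv g x -> exists t, Pi x = Some t /\ LL t) ->
  exists w : nat -> Al K m, eperiodic w /\ forall s, valid s ->
    sem TT g (update Pi pi (labtr R s)) = Vh R g (updw w (Ordinal hpi) s).
Proof.
move=> hv HPi.
have [s0 vs0] := valid_ex K.
have hc : forall j : 'I_m, exists r : nat -> St K, eperiodic r /\
    ((pi != val j) && hform_fv g (val j) -> Pi (val j) = Some (labtr R r)).
  move=> j; case: (boolP ((pi != val j) && hform_fv g (val j))) => hj.
    have [t [Pt Lt]] := HPi _ hj; have [r [vr pr er]] := lasso_run Lt.
    by exists r; split => // _; rewrite Pt er.
  exists (fun _ => s0 0%N); split => //.
  by exists 0%N, 1%N.
have [c hc'] := choice hc.
exists (fun k => [ffun j => c j k]); split.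
  by apply: eper_ffun => j; case: (hc' j).
move=> s vs; rewrite /Vh -update_asg /=; apply: sem_coinc => x hx.
rewrite /update; case: eqP => // ne.
have xm : (x < m)%N by apply: hvars_fv hv hx.
rewrite /asg insubT /=; case: (hc' (Sub x xm)) => _ ->; last first.
  by rewrite /= hx andbT; apply/eqP => e; apply: ne; rewrite e.
by congr (Some (labtr R _)); apply/funext => k; rewrite ffunE.
Qed.

Lemma main_ind (psi : hform AP) : hform_wf psi -> forall m, hvars m psi ->
  forall Pi : assignment AP R,
  (forall x, hform_fv psi x -> exists t, Pi x = Some t /\ LL t) ->
  sem TT psi Pi = sem LL psi Pi.
Proof.
elim: psi => [pi g IH|pi g IH|f] wf m hv Pi HPi; last by [].
all: case: hv => hpi hvg; have [w [pw E]] := setup hpi hvg HPi.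
all: have IH' : forall t, LL t -> sem LL g (update Pi pi t) = sem TT g (update Pi pi t)
  by move=> t Lt; apply: esym; apply: (IH wf m hvg) => x hx;
         rewrite /update; case: eqP => [_|ne]; [by exists t|];
         apply: HPi; rewrite /= hx andbT; apply/eqP => e; apply: ne; rewrite e.
all: have qb := hvars_qbound R K hvg.
all: have [s0 vs0] := valid_ex K.
all: have [s1 [vs1 ps1 _]] := lasso_step (fun _ : seq (Al K m) => tt) (Ordinal hpi) pw vs0.
all: have bnd : forall t, TT t -> 0 <= sem TT g (update Pi pi t) <= 1
  by move=> t /traces_run [s [vs et]]; rewrite et E //; exact: Vh_bounds.
- rewrite /=.
  have -> : [set x | exists2 t, LL t & x = sem LL g (update Pi pi t)] =
            [set x | exists2 t, LL t & x = sem TT g (update Pi pi t)].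
    by apply/seteqP; split => x [t Lt ->]; exists t => //; rewrite IH'.
  apply: le_anti; apply/andP; split.
    rewrite -[leRHS]addr0; apply: inf_approx.
    + by exists (sem TT g (update Pi pi (labtr R s0))); exists (labtr R s0) => //; apply/traces_run; exists s0.
    + by exists (sem TT g (update Pi pi (labtr R s1))); exists (labtr R s1) => //; exact: lasso_of_run.
    + by move=> x [t Tt ->]; case/andP: (bnd t Tt).
    + move=> y [t Lt ->]; exists (sem TT g (update Pi pi t)); [by exists t => //; case: Lt | by rewrite addr0].
  apply/ler_addgt0Pr => eps e0; apply: inf_approx.
  + by exists (sem TT g (update Pi pi (labtr R s1))); exists (labtr R s1) => //; exact: lasso_of_run.
  + by exists (sem TT g (update Pi pi (labtr R s0))); exists (labtr R s0) => //; apply/traces_run; exists s0.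
  + by move=> x [t [Tt _] ->]; case/andP: (bnd t Tt).
  + move=> y [t /traces_run [s [vs et]] ey]; rewrite ey et.
    have [S [h Hh]] := hf_recog K (g:=g) wf qb e0.
    have [s' [vs' ps' hb]] := lasso_step h (Ordinal hpi) pw vs.
    exists (sem TT g (update Pi pi (labtr R s'))); first by exists (labtr R s') => //; exact: lasso_of_run.
    by rewrite !E //; exact: (Hh _ _ (beq_sym hb)).
- rewrite /=.
  have -> : [set x | exists2 t, LL t & x = sem LL g (update Pi pi t)] =
            [set x | exists2 t, LL t & x = sem TT g (update Pi pi t)].
    by apply/seteqP; split => x [t Lt ->]; exists t => //; rewrite IH'.
  apply: le_anti; apply/andP; split.
    apply/ler_addgt0Pr => eps e0; apply: sup_approx.
    + by exists (sem TT g (update Pi pi (labtr R s0))); exists (labtr R s0) => //; apply/traces_run; exists s0.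
    + by exists (sem TT g (update Pi pi (labtr R s1))); exists (labtr R s1) => //; exact: lasso_of_run.
    + by move=> x [t [Tt _] ->]; case/andP: (bnd t Tt).
    + move=> y [t /traces_run [s [vs et]] ey]; rewrite ey et.
      have [S [h Hh]] := hf_recog K (g:=g) wf qb e0.
      have [s' [vs' ps' hb]] := lasso_step h (Ordinal hpi) pw vs.
      exists (sem TT g (update Pi pi (labtr R s'))); first by exists (labtr R s') => //; exact: lasso_of_run.
      by rewrite !E //; exact: (Hh _ _ hb).
  rewrite -[leRHS]addr0; apply: sup_approx.
  + by exists (sem TT g (update Pi pi (labtr R s1))); exists (labtr R s1) => //; exact: lasso_of_run.
  + by exists (sem TT g (update Pi pi (labtr R s0))); exists (labtr R s0) => //; apply/traces_run; exists s0.
  + by move=> x [t Tt ->]; case/andP: (bnd t Tt).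
  + move=> y [t Lt ->]; exists (sem TT g (update Pi pi t)); [by exists t => //; case: Lt | by rewrite addr0].
Qed.

End MainProof.

Unset Implicit Arguments.
Set Strict Implicit.

Theorem mainTheorem8 (AP : finType) (R : realType) (psi : hform AP)
  (K : kripke AP) (Pi : assignment AP R) :
  hform_wf psi ->
  (forall x, hform_fv psi x -> exists t, Pi x = Some t /\ lassos_of R K t) ->
  sem (traces_of R K) psi Pi = sem (lassos_of R K) psi Pi.
Proof.
move=> wf HPi; have [m hm] := hvars_ex psi.
exact: (main_ind wf hm HPi).
Qed.
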